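(* Let $G$ be a hypergraph and suppose that for some positive integers $t$, $k$ and $m$ the (unordered) $t$-tuples of vertices of $G$ can be $k$-colored such that every hyperedge containing at least $m$ vertices contains two differently colored $t$-tuples. Then for every integer $t'>t$ there exists an integer $m'=m'(t')$ such that the $t'$-tuples of vertices of $G$ can be $2$-colored such that every hyperedge containing at least $m'$ vertices contains two differently colored $t'$-tuples.
   Context: A $t$-tuple of vertices is a $t$-element subset of the vertex set; a hyperedge contains a $t$-tuple if the $t$-tuple is a subset of it. *)

(* Defs.v *)
From mathcomp Require Export all_boot finmap.
Set Implicit Arguments. Unset Strict Implicit. Unset Printing Implicit Defensive.
Local Open Scope fset_scope.

Definition hypergraph (V : choiceType) := (V -> Prop) -> Prop.

Definition fsub_edge (V : choiceType) (S : {fset V}) (e : V -> Prop) : Prop :=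
  forall x, x \in S -> e x.

Definition edge_has_at_least (V : choiceType) (m : nat) (e : V -> Prop) : Prop :=
  exists S : {fset V}, m <= #|` S| /\ fsub_edge S e.

(* A t-tuple contained in e is a t-element finite subset of e. *)
Definition tuple_in (V : choiceType) (t : nat) (A : {fset V}) (e : V -> Prop) :=
  #|` A| = t /\ fsub_edge A e.

(* c is a k-coloring of the t-tuples (its values on sets of size <> t are
   irrelevant) such that every hyperedge with at least m vertices contains
   two differently colored t-tuples. *)
Definition good_tuple_coloring (V : choiceType) (G : hypergraph V)
    (t k m : nat) (c : {fset V} -> 'I_k) : Prop :=
  forall e, G e -> edge_has_at_least m e ->
    exists A B : {fset V}, tuple_in t A e /\ tuple_in t B e /\ c A <> c B.
Arguments good_tuple_coloring {V} G t k m c.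

(* Main.v *)
Require Import Defs.
From mathcomp Require Import all_boot finmap.
From mathcomp Require Import zify.

Section Helpers.
Local Open Scope fset_scope.
Section S.
Variable V : choiceType.

Lemma fsub_size (X : {fset V}) n : n <= #|` X| -> exists Y, Y `<=` X /\ #|` Y| = n.
Proof.
move: {2}#|` X| (erefl #|` X|) => s; elim: s X => [|s IH] X HX Hn.
  by exists X; split => //; lia.
have [->|Hlt] := eqVneq n s.+1; first by exists X.
have : X != fset0 by rewrite -cardfs_gt0; lia.
case/fset0Pn => x Hx.
have Hc := cardfsD1 x X; rewrite Hx /= in Hc.
have [Y [HY1 HY2]] := IH (X `\ x) (ltac:(lia)) (ltac:(lia)) : exists Y, _.
exists Y; split => //; apply: fsubset_trans HY1 _; exact: fsubsetDl.
Qed.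

Definition mono t k (f : {fset V} -> 'I_k) (T : {fset V}) (i : 'I_k) :=
  forall A, A `<=` T -> #|` A| = t -> f A = i.

Arguments mono t {k}.
Definition ramsey_prop t := forall k n, exists N, forall (S : {fset V}) (f : {fset V} -> 'I_k),
  N <= #|` S| -> exists T, T `<=` S /\ #|` T| = n /\ exists i, mono t f T i.

Lemma ramsey0 : ramsey_prop 0.
Proof.
move=> k n; exists n => S f HS.
have [T [HT1 HT2]] := fsub_size _ _ HS.
exists T; split => //; split => //; exists (f fset0) => A _ HA.
by rewrite (cardfs0_eq HA).
Qed.

Lemma ramseyS t : ramsey_prop t -> ramsey_prop t.+1.
Proof.
move=> Rt k.
suff Aux : forall s (ns : 'I_k -> nat), \sum_(i < k) ns i <= s -> exists N,
  forall (S : {fset V}) (f : {fset V} -> 'I_k), N <= #|` S| ->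
  exists i T, T `<=` S /\ #|` T| = ns i /\ mono t.+1 f T i.
  move=> n; have Hsum : \sum_(i < k) (fun _ => n) i <= k * n.
    by rewrite big_const_ord iter_addn_0 mulnC.
  have [N HN] := Aux (k * n) (fun _ => n) Hsum.
  exists N => S f HS; have [i [T [H1 [H2 H3]]]] := HN S f HS.
  by exists T; split => //; split => //; exists i.
elim=> [|s IH] ns Hs.
  exists 0 => S f _; exists (f fset0), fset0; split; first exact: fsub0set.
  split.
    rewrite cardfs0; apply/esym/eqP; rewrite -leqn0.
    apply: leq_trans Hs; by rewrite (bigD1 (f fset0)) //= leq_addr.
  by move=> A /fsubset_leq_card; rewrite cardfs0 => ?; lia.
case: (boolP [exists i, ns i == 0]) => [/existsP [i /eqP Hi]|Hnz].
  exists 0 => S f _; exists i, fset0; split; first exact: fsub0set.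
  split; first by rewrite cardfs0 Hi.
  by move=> A /fsubset_leq_card; rewrite cardfs0 => H1 H2; lia.
have Hpos : forall i, 0 < ns i.
  by move=> i; rewrite lt0n; apply/negP => Hi; apply: (negP Hnz); apply/existsP; exists i.
pose ns' (i j : 'I_k) := if j == i then (ns j).-1 else ns j.
have Hs' : forall i, \sum_(j < k) ns' i j <= s.
  move=> i.
  have E : \sum_(j < k | j != i) ns' i j = \sum_(j < k | j != i) ns j.
    by apply: eq_bigr => j /negbTE; rewrite /ns' => ->.
  rewrite (bigD1 i) //= in Hs; rewrite (bigD1 i) //= E /ns' eqxx.
  have := Hpos i; move: Hs; set a := \sum_(j < k | j != i) ns j; lia.
have : forall i, exists N, (forall (S : {fset V}) (f : {fset V} -> 'I_k), N <= #|` S| ->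
   exists j T, T `<=` S /\ #|` T| = ns' i j /\ mono t.+1 f T j) := fun i => IH (ns' i) (Hs' i).
case/fin_all_exists => Nf HNf.
have [M HM] := Rt k (\max_(i < k) Nf i).
exists M.+1 => S f HS.
have : S != fset0 by rewrite -cardfs_gt0; lia.
case/fset0Pn => x Hx.
have HS1 : M <= #|` S `\ x| by move: HS; rewrite (cardfsD1 x S) Hx /=; lia.
have [T1 [HT1S [HT1c [i Hi]]]] := HM (S `\ x) (fun A => f (x |` A)) HS1.
have HT1N : Nf i <= #|` T1| by rewrite HT1c; exact: leq_bigmax.
have [j [T2 [HT2 [HT2c HT2m]]]] := HNf i T1 f HT1N.
have Hxn : x \notin T2.
  by apply/negP => /(fsubsetP (fsubset_trans HT2 HT1S)); rewrite fsetD11.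
case: (eqVneq j i) => [Eji|Nji].
  subst j; exists i, (x |` T2); split.
    apply/fsubsetP => y /fset1UP [->//|/(fsubsetP HT2) /(fsubsetP HT1S) /fsetD1P []//].
  split.
    rewrite cardfsU1 Hxn HT2c /ns' eqxx; have := Hpos i; lia.
  move=> A HA HAc; case: (boolP (x \in A)) => HxA.
    rewrite -(fsetD1K HxA); apply: Hi.
      apply/fsubsetP => y /fsetD1P [Hyx HyA].
      have := fsubsetP HA y HyA; case/fset1UP => [Eq|]; first by rewrite Eq eqxx in Hyx.
      exact: (fsubsetP HT2).
    by move: HAc; rewrite (cardfsD1 x A) HxA /=; lia.
  apply: HT2m => //; apply/fsubsetP => y HyA.
  have := fsubsetP HA y HyA; case/fset1UP => // Eq.
  by rewrite -Eq HyA in HxA.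
exists j, T2; split.
  exact: fsubset_trans HT2 (fsubset_trans HT1S (fsubsetDl _ _)).
split; last done.
by rewrite HT2c /ns' (negbTE Nji).
Qed.

Lemma ramsey t : ramsey_prop t.
Proof. elim: t => [|t IH]; [exact: ramsey0 | exact: ramseyS]. Qed.
End S.
Section P.
Variable V : choiceType.
Variables (t k : nat) (c : {fset V} -> 'I_k).

Lemma noD_eq (A B : {fset V}) : A `\` B = fset0 -> #|` A| = #|` B| -> A = B.
Proof.
move=> E HAB; apply/eqP; rewrite eqEfcard HAB leqnn andbT.
apply/fsubsetP => x Hx; apply/negPn/negP => HxB.
have : x \in A `\` B by apply/fsetDP.
by rewrite E inE.
Qed.
Arguments noD_eq {A B}.

Lemma path_lem n : forall A B : {fset V}, #|` A `\` B| <= n -> #|` A| = t -> #|` B| = t ->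
  c A != c B ->
  exists A1 B1, A1 `<=` A `|` B /\ B1 `<=` A `|` B /\ #|` A1| = t /\ #|` B1| = t /\
    c A1 != c B1 /\ #|` A1 `|` B1| <= t.+1.
Proof.
elim: n => [|n IH] A B HD HA HB Hc.
  have E : A `\` B = fset0 by apply: cardfs0_eq; lia.
  by rewrite (noD_eq E (etrans HA (esym HB))) eqxx in Hc.
have [E|NE] := eqVneq (A `\` B) fset0.
  by rewrite (noD_eq E (etrans HA (esym HB))) eqxx in Hc.
case/fset0Pn: (NE) => a /fsetDP [HaA HaB].
have [E'|NE'] := eqVneq (B `\` A) fset0.
  by rewrite (noD_eq E' (etrans HB (esym HA))) eqxx in Hc.
case/fset0Pn: NE' => b /fsetDP [HbB HbA].
set A' := b |` (A `\ a).
have HbA' : b \notin A `\ a by rewrite inE negb_and HbA orbT.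
have HA'c : #|` A'| = t.
  rewrite /A' cardfsU1 HbA'; move: HA; rewrite (cardfsD1 a A) HaA /=; lia.
have HA'sub : A' `<=` A `|` B.
  apply/fsubsetP => y /fset1UP [->|/fsetD1P [_ Hy]]; apply/fsetUP; by [right|left].
have HAA' : #|` A `|` A'| <= t.+1.
  have S1 : A `|` A' `<=` b |` A.
    apply/fsubsetP => y /fsetUP [Hy|/fset1UP [->|/fsetD1P [_ Hy]]];
      by [apply: fset1Ur | apply: fset1U1].
  apply: leq_trans (fsubset_leq_card S1) _.
  by rewrite cardfsU1 HbA HA.
case: (eqVneq (c A) (c A')) => Ec; last first.
  exists A, A'; do !split => //; exact: fsubsetUl.
have HD' : #|` A' `\` B| <= n.
  have S2 : A' `\` B `<=` (A `\` B) `\ a.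
    apply/fsubsetP => y /fsetDP [/fset1UP [->|/fsetD1P [Hya HyA]] HyB].
      by rewrite HbB in HyB.
    by apply/fsetD1P; split => //; apply/fsetDP.
  apply: leq_trans (fsubset_leq_card S2) _.
  have Ha' : a \in A `\` B by apply/fsetDP.
  have := cardfsD1 a (A `\` B); rewrite Ha' /=; lia.
have Hc' : c A' != c B by rewrite -Ec.
have [A1 [B1 [H1 [H2 H3]]]] := IH A' B HD' HA'c HB Hc'.
have S3 : A' `|` B `<=` A `|` B.
  apply/fsubsetP => y /fsetUP [/(fsubsetP HA'sub) //|Hy]; apply/fsetUP; by right.
exists A1, B1; split; first exact: fsubset_trans H1 S3.
split; first exact: fsubset_trans H2 S3.
done.
Qed.
End P.
End Helpers.

Theorem proposition3 (V : choiceType) (G : hypergraph V) (t k m : nat) :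
  0 < t -> 0 < k -> 0 < m ->
  (exists c : {fset V} -> 'I_k, good_tuple_coloring G t k m c) ->
  forall t' : nat, t < t' ->
    exists m' : nat, exists c' : {fset V} -> 'I_2,
      good_tuple_coloring G t' 2 m' c'.
Proof.
move=> Ht Hk Hm [c Hgood] t' Htt.
have [N HN] := ramsey V t k t'.
pose mono_b (T : {fset V}) := all (fun A : {fset V} => all (fun B : {fset V} =>
   (#|` A| != t) || (#|` B| != t) || (c A == c B)) (fpowerset T)) (fpowerset T).
pose c' (T : {fset V}) : 'I_2 := @Ordinal 2 (mono_b T) (leq_b1 _).
exists (N + m + t' + t')%N, c' => e He [S [HSc HSe]].
have Hm' : edge_has_at_least m e by exists S; split => //; lia.
have [A [B [[HAc HAe] [[HBc HBe] Hneq]]]] := Hgood e He Hm'.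
have [T [HTS [HTc [i Hi]]]] := HN S c (ltac:(lia)).
have Hneq' : c A != c B by apply/eqP.
have [A1 [B1 [H1 [H2 [H3 [H4 [H5 H6]]]]]]] := @path_lem V t k c _ A B (leqnn _) HAc HBc Hneq'.
set X := (A1 `|` B1)%fset.
have HXe : fsub_edge X e.
  move=> x /fsetUP [/(fsubsetP H1)|/(fsubsetP H2)] /fsetUP [/HAe|/HBe] //.
have HXc : (#|` X| <= t')%N.
  move: H6 Htt; rewrite -/X. lia.
have HSX : (t' - #|` X|)%N <= #|` (S `\` X)%fset|.
  rewrite cardfsD; have := fsubset_leq_card (fsubsetIr S X); lia.
have [Y [HYS HYc]] := @fsub_size V _ _ HSX.
have HXY : #|` (X `&` Y)%fset| = 0.
  apply/eqP; rewrite cardfs_eq0; apply/eqP/fsetP => y; rewrite inE.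
  apply/negP => /andP [HyX HyY]; have := fsubsetP HYS y HyY.
  by rewrite inE HyX.
set U := (X `|` Y)%fset.
have HUc : #|` U| = t' by rewrite /U cardfsU HXY HYc; lia.
have HUe : fsub_edge U e.
  move=> x /fsetUP [/HXe //|/(fsubsetP HYS) /fsetDP [/HSe //]].
have HmT : mono_b T.
  apply/allP => A' HA'; apply/allP => B' HB'.
  rewrite fpowersetE in HA'; rewrite fpowersetE in HB'.
  case: (eqVneq #|` A'| t) => [HA2|]; last by rewrite orTb.
  case: (eqVneq #|` B'| t) => [HB2|]; last by rewrite orbT.
  by rewrite (Hi _ HA' HA2) (Hi _ HB' HB2) eqxx orbT.
have HmU : mono_b U = false.
  apply/negbTE/negP => /allP /(_ A1) HH.
  have HA1U : A1 \in fpowerset U.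
    by rewrite fpowersetE; apply: fsubset_trans (fsubsetUl _ _) (fsubsetUl _ _).
  have HB1U : B1 \in fpowerset U.
    by rewrite fpowersetE; apply: fsubset_trans (fsubsetUr _ _) (fsubsetUl _ _).
  move: (HH HA1U) => /allP /(_ B1 HB1U).
  by rewrite H3 H4 eqxx /= (negbTE H5).
exists T, U; split; first by split => // x /(fsubsetP HTS) /HSe.
split; first by split.
move=> /(congr1 val) /=; by rewrite HmT HmU.
Qed.
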